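(* For every integer $n \geq 3$, $$\Delta_n(FP/ES) = \frac{2^{n-2}}{n-1} \quad\text{and}\quad \Delta_n(ES/FP) = \frac{n-1}{2},$$ where $$\Delta_n(FP/ES) = \max_{T\in RB(n)}\ \max_{i\in[n]}\ \sup_{l>0} \frac{FP_T(i)}{ES_T(i)},\qquad \Delta_n(ES/FP) = \max_{T\in RB(n)}\ \max_{i\in[n]}\ \sup_{l>0} \frac{ES_T(i)}{FP_T(i)},$$ the suprema being taken over all assignments $l$ of strictly positive lengths to the edges of $T$. Moreover, both equalities remain true if the suprema are restricted to positive edge-length assignments satisfying the molecular clock condition (MC).
   Context: $[n]=\{1,\dots,n\}$. A rooted binary phylogenetic tree on $[n]$ is a rooted tree with root $\rho$ and leaf set $[n]$ in which every non-leaf vertex (including $\rho$) is unlabelled and has out-degree exactly 2. Two such trees are identified if there is a graph isomorphism between them that sends leaf $x$ to leaf $x$ for every $x$. $RB(n)$ denotes the (finite) set of all such trees. Each edge $e$ carries a length $l(e)>0$. For an edge $e$, $n(e)$ is the number of leaves descended from $e$ (that is, below its endpoint farther from the root). $P(T;\rho,i)$ is the path from $\rho$ to leaf $i$. The Fair Proportion index is $FP_T(i)=\sum_{e\in P(T;\rho,i)} l(e)/n(e)$. The Equal Splits index is $ES_T(i)=\sum_{e\in P(T;\rho,i)} l(e)/\Pi(e,i)$, where $\Pi(e,i)=1$ if $e$ is the pendant edge incident with $i$, and otherwise $\Pi(e,i)$ is the product of the out-degrees of the interior vertices on the directed path from the lower endpoint of $e$ to $i$. In a binary tree this equals $2^{k}$,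 where $k$ is the number of edges strictly between $e$ and $i$. Molecular clock condition (MC): the sum of the edge lengths on the path from $\rho$ to leaf $i$ is the same for every leaf $i$. *)

(* Defs.v *)
From Stdlib Require Import Reals Lra List Permutation Arith.
Import ListNotations.
Open Scope R_scope.

(* A rooted binary phylogenetic tree together with an edge-length assignment.
   [WNode l1 t1 l2 t2] is an interior vertex with two outgoing edges: the edge
   to the subtree [t1] has length [l1], the edge to [t2] has length [l2]. *)
Inductive wtree : Type :=
| WLeaf : nat -> wtree
| WNode : R -> wtree -> R -> wtree -> wtree.

Fixpoint leaves (t : wtree) : list nat :=
  match t with
  | WLeaf x => [x]
  | WNode _ t1 _ t2 => leaves t1 ++ leaves t2
  end.

(* T is (a representative of) an element of RB(n): the root is an interior
   vertex and the leaves are labelled bijectively by 1..n. *)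
Definition in_RB (n : nat) (t : wtree) : Prop :=
  (exists l1 t1 l2 t2, t = WNode l1 t1 l2 t2) /\
  Permutation (leaves t) (seq 1 n).

Fixpoint pos_lengths (t : wtree) : Prop :=
  match t with
  | WLeaf _ => True
  | WNode l1 t1 l2 t2 => 0 < l1 /\ 0 < l2 /\ pos_lengths t1 /\ pos_lengths t2
  end.

Fixpoint path_length (t : wtree) (i : nat) : R :=
  match t with
  | WLeaf _ => 0
  | WNode l1 t1 l2 t2 =>
      if in_dec Nat.eq_dec i (leaves t1) then l1 + path_length t1 i
      else if in_dec Nat.eq_dec i (leaves t2) then l2 + path_length t2 i
      else 0
  end.

Definition MC (t : wtree) : Prop :=
  forall i j, In i (leaves t) -> In j (leaves t) ->
    path_length t i = path_length t j.

Fixpoint depth (t : wtree) (i : nat) : nat :=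
  match t with
  | WLeaf _ => 0
  | WNode _ t1 _ t2 =>
      if in_dec Nat.eq_dec i (leaves t1) then S (depth t1 i)
      else if in_dec Nat.eq_dec i (leaves t2) then S (depth t2 i)
      else 0
  end.

(* Fair Proportion index: sum over path edges e of l(e)/n(e), where n(e) is
   the number of leaves below e (= leaves of the child subtree). *)
Fixpoint FP (t : wtree) (i : nat) : R :=
  match t with
  | WLeaf _ => 0
  | WNode l1 t1 l2 t2 =>
      if in_dec Nat.eq_dec i (leaves t1)
      then l1 / INR (length (leaves t1)) + FP t1 i
      else if in_dec Nat.eq_dec i (leaves t2)
      then l2 / INR (length (leaves t2)) + FP t2 i
      else 0
  end.

(* Equal Splits index: sum over path edges e of l(e)/Pi(e,i), where
   Pi(e,i) = 2^k, k = number of edges strictly between e and i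
   = depth of i in the child subtree below e. *)
Fixpoint ES (t : wtree) (i : nat) : R :=
  match t with
  | WLeaf _ => 0
  | WNode l1 t1 l2 t2 =>
      if in_dec Nat.eq_dec i (leaves t1)
      then l1 / 2 ^ depth t1 i + ES t1 i
      else if in_dec Nat.eq_dec i (leaves t2)
      then l2 / 2 ^ depth t2 i + ES t2 i
      else 0
  end.

Definition is_sup_ratio (n : nat) (P : wtree -> Prop)
    (f g : wtree -> nat -> R) (v : R) : Prop :=
  (forall t i, in_RB n t -> In i (seq 1 n) -> pos_lengths t -> P t ->
     f t i / g t i <= v) /\
  (forall c, c < v -> exists t i, in_RB n t /\ In i (seq 1 n) /\
     pos_lengths t /\ P t /\ c < f t i / g t i).

(* Main.v *)
Require Import Defs.
From Stdlib Require Import Reals Lra Lia List Permutation Arith.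
Import ListNotations.
Open Scope R_scope.

Lemma div_le_aux x y C : 0 < y -> x <= C * y -> x / y <= C.
Proof.
  intros Hy H. apply (Rmult_le_reg_r y); auto.
  unfold Rdiv. rewrite Rmult_assoc, Rinv_l by lra. lra.
Qed.

Lemma lt_div_aux c x y : 0 < y -> c * y < x -> c < x / y.
Proof.
  intros Hy H. apply (Rmult_lt_reg_r y); auto.
  unfold Rdiv. rewrite Rmult_assoc, Rinv_l by lra. lra.
Qed.

Lemma div_cmp A B P Q l : 0<A -> 0<B -> 0<P -> 0<=l -> B*P <= Q*A ->
  l/A <= Q/B*(l/P).
Proof.
  intros HA HB HP Hl H.
  assert (E1 : l/A = (l*B*P) * /(A*B*P)) by (field; lra).
  assert (E2 : Q/B*(l/P) = (Q*A*l) * /(A*B*P)) by (field; lra).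
  rewrite E1, E2. apply Rmult_le_compat_r.
  - left; apply Rinv_0_lt_compat. apply Rmult_lt_0_compat; [apply Rmult_lt_0_compat|]; lra.
  - nra.
Qed.

Lemma leaves_ne s : (1 <= length (leaves s))%nat.
Proof. induction s; simpl; [lia|]. rewrite length_app. lia. Qed.

Lemma depth_lt s i : In i (leaves s) -> (depth s i < length (leaves s))%nat.
Proof.
  induction s as [x|l1 t1 IH1 l2 t2 IH2]; simpl; intros Hi; [lia|].
  rewrite length_app.
  destruct (in_dec Nat.eq_dec i (leaves t1)) as [h1|h1].
  - specialize (IH1 h1). pose proof (leaves_ne t2). lia.
  - destruct (in_dec Nat.eq_dec i (leaves t2)) as [h2|h2].
    + specialize (IH2 h2). pose proof (leaves_ne t1). lia.
    + apply in_app_or in Hi; tauto.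
Qed.

Lemma pow_mono a b : (a <= b)%nat -> 2 ^ a * INR (S b) <= 2 ^ b * INR (S a).
Proof.
  induction 1.
  - lra.
  - pose proof (pow_lt 2 a ltac:(lra)). pose proof (pos_INR m).
    rewrite !S_INR in *. simpl (2 ^ S m). nra.
Qed.

Lemma FP_nonneg s i : pos_lengths s -> 0 <= FP s i.
Proof.
  induction s as [x|l1 t1 IH1 l2 t2 IH2]; simpl; intros Hp; [lra|].
  destruct Hp as (H1&H2&H3&H4).
  pose proof (leaves_ne t1); pose proof (leaves_ne t2).
  destruct (in_dec Nat.eq_dec i (leaves t1)).
  - specialize (IH1 H3). assert (0 < INR (length (leaves t1))) by (apply lt_0_INR; lia).
    assert (0 <= l1 / INR (length (leaves t1))) by (apply Rlt_le, Rdiv_lt_0_compat; lra). lra.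
  - destruct (in_dec Nat.eq_dec i (leaves t2)); [|lra].
    specialize (IH2 H4). assert (0 < INR (length (leaves t2))) by (apply lt_0_INR; lia).
    assert (0 <= l2 / INR (length (leaves t2))) by (apply Rlt_le, Rdiv_lt_0_compat; lra). lra.
Qed.

Lemma ES_nonneg s i : pos_lengths s -> 0 <= ES s i.
Proof.
  induction s as [x|l1 t1 IH1 l2 t2 IH2]; simpl; intros Hp; [lra|].
  destruct Hp as (H1&H2&H3&H4).
  destruct (in_dec Nat.eq_dec i (leaves t1)).
  - specialize (IH1 H3).
    assert (0 <= l1 / 2 ^ depth t1 i) by (apply Rlt_le, Rdiv_lt_0_compat; [lra|apply pow_lt; lra]). lra.
  - destruct (in_dec Nat.eq_dec i (leaves t2)); [|lra].
    specialize (IH2 H4).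
    assert (0 <= l2 / 2 ^ depth t2 i) by (apply Rlt_le, Rdiv_lt_0_compat; [lra|apply pow_lt; lra]). lra.
Qed.

Definition C1 (N : nat) := 2 ^ (N - 1) / INR N.
Definition C2 (N : nat) := INR N / 2.

Lemma step1 N s i l : (1 <= N)%nat -> 0 <= l -> In i (leaves s) ->
  (length (leaves s) <= N)%nat ->
  l / INR (length (leaves s)) <= C1 N * (l / 2 ^ depth s i).
Proof.
  intros HN Hl Hi Hlen. pose proof (depth_lt s i Hi) as Hd.
  unfold C1.
  destruct (length (leaves s)) as [|a] eqn:Ea; [lia|].
  destruct N as [|N]; [lia|]. replace (S N - 1)%nat with N by lia.
  apply div_cmp; auto.
  - apply lt_0_INR; lia.
  - apply lt_0_INR; lia.
  - apply pow_lt; lra.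
  - pose proof (Rle_pow 2 (depth s i) a ltac:(lra) ltac:(lia)).
    pose proof (pow_mono a N ltac:(lia)). pose proof (pos_INR (S N)). nra.
Qed.

Lemma step2 N s i l : (2 <= N)%nat -> 0 <= l -> In i (leaves s) ->
  (length (leaves s) <= N)%nat ->
  l / 2 ^ depth s i <= C2 N * (l / INR (length (leaves s))).
Proof.
  intros HN Hl Hi Hlen. unfold C2.
  apply div_cmp; auto; try lra.
  - apply pow_lt; lra.
  - apply lt_0_INR; pose proof (leaves_ne s); lia.
  - destruct s as [x|l1 t1 l2 t2].
    + simpl. simpl in Hlen. apply le_INR in HN. simpl in HN. lra.
    + assert (Hd : (1 <= depth (WNode l1 t1 l2 t2) i)%nat).
      { simpl. simpl in Hi. destruct (in_dec Nat.eq_dec i (leaves t1)); [lia|].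
        destruct (in_dec Nat.eq_dec i (leaves t2)); [lia|]. apply in_app_or in Hi; tauto. }
      pose proof (Rle_pow 2 1 _ ltac:(lra) Hd).
      apply le_INR in Hlen. pose proof (pos_INR N). replace (2^1) with 2 in H by (simpl; lra).
      pose proof (Rmult_le_compat_l (INR N) _ _ H0 H). lra.
Qed.

Lemma FP_le N s i : (1 <= N)%nat -> pos_lengths s -> (length (leaves s) <= N)%nat ->
  FP s i <= C1 N * ES s i.
Proof.
  intros HN. induction s as [x|l1 t1 IH1 l2 t2 IH2]; simpl; intros Hp Hl.
  - lra.
  - destruct Hp as (H1&H2&H3&H4). rewrite length_app in Hl.
    destruct (in_dec Nat.eq_dec i (leaves t1)).
    + pose proof (step1 N t1 i l1 HN ltac:(lra) i0 ltac:(lia)).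
      specialize (IH1 H3 ltac:(lia)). lra.
    + destruct (in_dec Nat.eq_dec i (leaves t2)).
      * pose proof (step1 N t2 i l2 HN ltac:(lra) i0 ltac:(lia)).
        specialize (IH2 H4 ltac:(lia)). lra.
      * lra.
Qed.

Lemma ES_le N s i : (2 <= N)%nat -> pos_lengths s -> (length (leaves s) <= N)%nat ->
  ES s i <= C2 N * FP s i.
Proof.
  intros HN. induction s as [x|l1 t1 IH1 l2 t2 IH2]; simpl; intros Hp Hl.
  - lra.
  - destruct Hp as (H1&H2&H3&H4). rewrite length_app in Hl.
    destruct (in_dec Nat.eq_dec i (leaves t1)).
    + pose proof (step2 N t1 i l1 HN ltac:(lra) i0 ltac:(lia)).
      specialize (IH1 H3 ltac:(lia)). lra.
    + destruct (in_dec Nat.eq_dec i (leaves t2)).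
      * pose proof (step2 N t2 i l2 HN ltac:(lra) i0 ltac:(lia)).
        specialize (IH2 H4 ltac:(lia)). lra.
      * lra.
Qed.

Lemma upper1 n t i : (3 <= n)%nat -> in_RB n t -> In i (seq 1 n) -> pos_lengths t ->
  FP t i / ES t i <= 2 ^ (n - 2) / INR (n - 1).
Proof.
  intros Hn [[l1 [t1 [l2 [t2 ->]]]] Hp] Hi Hpos.
  assert (Hin : In i (leaves (WNode l1 t1 l2 t2))) by
    (apply (Permutation_in _ (Permutation_sym Hp)); auto).
  pose proof (Permutation_length Hp) as Hlen. rewrite length_seq in Hlen.
  replace (2 ^ (n - 2) / INR (n - 1)) with (C1 (n - 1))
    by (unfold C1; f_equal; f_equal; lia).
  simpl in *. rewrite length_app in Hlen.
  pose proof (leaves_ne t1); pose proof (leaves_ne t2).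
  destruct Hpos as (H1&H2&H3&H4).
  destruct (in_dec Nat.eq_dec i (leaves t1)).
  - pose proof (step1 (n-1) t1 i l1 ltac:(lia) ltac:(lra) i0 ltac:(lia)).
    pose proof (FP_le (n-1) t1 i ltac:(lia) H3 ltac:(lia)).
    pose proof (ES_nonneg t1 i H3).
    assert (0 < l1 / 2 ^ depth t1 i) by (apply Rdiv_lt_0_compat; [lra|apply pow_lt; lra]).
    apply div_le_aux; lra.
  - destruct (in_dec Nat.eq_dec i (leaves t2)).
    + pose proof (step1 (n-1) t2 i l2 ltac:(lia) ltac:(lra) i0 ltac:(lia)).
      pose proof (FP_le (n-1) t2 i ltac:(lia) H4 ltac:(lia)).
      pose proof (ES_nonneg t2 i H4).
      assert (0 < l2 / 2 ^ depth t2 i) by (apply Rdiv_lt_0_compat; [lra|apply pow_lt; lra]).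
      apply div_le_aux; lra.
    + apply in_app_or in Hin; tauto.
Qed.

Lemma upper2 n t i : (3 <= n)%nat -> in_RB n t -> In i (seq 1 n) -> pos_lengths t ->
  ES t i / FP t i <= INR (n - 1) / 2.
Proof.
  intros Hn [[l1 [t1 [l2 [t2 ->]]]] Hp] Hi Hpos.
  assert (Hin : In i (leaves (WNode l1 t1 l2 t2))) by
    (apply (Permutation_in _ (Permutation_sym Hp)); auto).
  pose proof (Permutation_length Hp) as Hlen. rewrite length_seq in Hlen.
  change (INR (n - 1) / 2) with (C2 (n - 1)).
  simpl in *. rewrite length_app in Hlen.
  pose proof (leaves_ne t1); pose proof (leaves_ne t2).
  destruct Hpos as (H1&H2&H3&H4).
  destruct (in_dec Nat.eq_dec i (leaves t1)).
  - pose proof (step2 (n-1) t1 i l1 ltac:(lia) ltac:(lra) i0 ltac:(lia)).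
    pose proof (ES_le (n-1) t1 i ltac:(lia) H3 ltac:(lia)).
    pose proof (FP_nonneg t1 i H3).
    assert (0 < l1 / INR (length (leaves t1))) by (apply Rdiv_lt_0_compat; [lra|apply lt_0_INR; lia]).
    apply div_le_aux; lra.
  - destruct (in_dec Nat.eq_dec i (leaves t2)).
    + pose proof (step2 (n-1) t2 i l2 ltac:(lia) ltac:(lra) i0 ltac:(lia)).
      pose proof (ES_le (n-1) t2 i ltac:(lia) H4 ltac:(lia)).
      pose proof (FP_nonneg t2 i H4).
      assert (0 < l2 / INR (length (leaves t2))) by (apply Rdiv_lt_0_compat; [lra|apply lt_0_INR; lia]).
      apply div_le_aux; lra.
    + apply in_app_or in Hin; tauto.
Qed.

Lemma lb P Q r a c : 0 < P -> 0 < Q -> 0 <= r -> 0 <= a -> c < Q / P ->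
  exists L, 0 < L /\ c < (L / P + r) / (L / Q + a).
Proof.
  intros HP HQ Hr Ha Hc.
  assert (Hd : 0 < Q - c * P).
  { assert (c * P < Q / P * P) by (apply Rmult_lt_compat_r; auto).
    replace (Q / P * P) with Q in H by (field; lra). lra. }
  pose proof (Rabs_pos c). pose proof (Rle_abs c).
  assert (HK : 0 <= a * P * Q) by (apply Rmult_le_pos; [apply Rmult_le_pos|]; lra).
  set (L := (Rabs c * (a * P * Q) + 1) / (Q - c * P)).
  assert (HL : L * (Q - c * P) = Rabs c * (a * P * Q) + 1) by (unfold L; field; lra).
  assert (HL0 : 0 < L) by (unfold L; apply Rdiv_lt_0_compat; nra).
  exists L. split; auto.
  assert (0 < L / Q) by (apply Rdiv_lt_0_compat; lra).
  apply lt_div_aux; [lra|].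
  assert (E : c * (L / Q + a) = (c * L * P + c * (a * P * Q)) / (P * Q)) by (field; lra).
  assert (E2 : L / P + r = (L * Q + r * (P * Q)) / (P * Q)) by (field; lra).
  rewrite E, E2. unfold Rdiv. apply Rmult_lt_compat_r.
  - apply Rinv_0_lt_compat; nra.
  - assert (c * (a * P * Q) <= Rabs c * (a * P * Q)) by (apply Rmult_le_compat_r; lra).
    assert (0 <= r * (P * Q)) by (apply Rmult_le_pos; nra). nra.
Qed.

Fixpoint cat (k : nat) : wtree :=
  match k with
  | O => WLeaf 2
  | S k' => WNode 1 (cat k') (INR k) (WLeaf (k' + 3))
  end.

Lemma leaves_cat k : leaves (cat k) = seq 2 (S k).
Proof.
  induction k; [reflexivity|].
  simpl cat. simpl leaves. rewrite IHk. rewrite (seq_S (S k)).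
  replace (k+3)%nat with (2 + S k)%nat by lia; reflexivity.
Qed.

Lemma pos_cat k : pos_lengths (cat k).
Proof.
  induction k; [simpl; auto|].
  change (pos_lengths (cat (S k))) with (0 < 1 /\ 0 < INR (S k) /\ pos_lengths (cat k) /\ True).
  repeat split; auto; try lra. apply lt_0_INR; lia.
Qed.

Lemma path_cat k j : In j (leaves (cat k)) -> path_length (cat k) j = INR k.
Proof.
  induction k; intros Hj; [reflexivity|].
  cbn [cat leaves path_length] in *.
  destruct (in_dec Nat.eq_dec j (leaves (cat k))).
  - rewrite IHk by auto. rewrite S_INR. lra.
  - destruct (in_dec Nat.eq_dec j [(k+3)%nat]).
    + lra.
    + apply in_app_or in Hj; tauto.
Qed.

Lemma depth_cat k : depth (cat k) 2 = k.
Proof.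
  induction k; [reflexivity|].
  simpl cat. simpl depth.
  destruct (in_dec Nat.eq_dec 2%nat (leaves (cat k))) as [h|h].
  - rewrite IHk; reflexivity.
  - exfalso; apply h. rewrite leaves_cat. simpl; auto.
Qed.

Lemma MC_of t h : (forall j, In j (leaves t) -> path_length t j = h) -> MC t.
Proof. intros H i j Hi Hj. rewrite (H i Hi), (H j Hj). reflexivity. Qed.

Definition T1 (k : nat) (L : R) : wtree := WNode L (cat k) (L + INR k) (WLeaf 1).

Lemma lower1 k c : c < 2 ^ k / INR (S k) ->
  exists t i, in_RB (S (S k)) t /\ In i (seq 1 (S (S k))) /\ pos_lengths t /\ MC t /\
    c < FP t i / ES t i.
Proof.
  intros Hc.
  assert (HP : 0 < INR (S k)) by (apply lt_0_INR; lia).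
  assert (HQ : 0 < 2 ^ k) by (apply pow_lt; lra).
  destruct (lb (INR (S k)) (2 ^ k) (FP (cat k) 2) (ES (cat k) 2) c HP HQ
              (FP_nonneg _ _ (pos_cat k)) (ES_nonneg _ _ (pos_cat k)) Hc) as [L [HL Hlt]].
  exists (T1 k L), 2%nat. split; [|split; [|split; [|split]]].
  - split. + unfold T1; eauto.
    + unfold T1. simpl leaves. rewrite leaves_cat.
      change (seq 1 (S (S k))) with (1%nat :: seq 2 (S k)).
      apply Permutation_sym, Permutation_cons_append.
  - simpl; auto.
  - unfold T1; simpl. repeat split; auto; try lra.
    + pose proof (pos_INR k); lra.
    + apply pos_cat.
  - apply MC_of with (L + INR k). intros j Hj. unfold T1 in *. cbn [leaves] in Hj.
    cbn [path_length leaves].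
    destruct (in_dec Nat.eq_dec j (leaves (cat k))).
    + rewrite path_cat; auto.
    + destruct (in_dec Nat.eq_dec j [1%nat]); [lra|]. apply in_app_or in Hj; tauto.
  - unfold T1. cbn [FP ES].
    destruct (in_dec Nat.eq_dec 2%nat (leaves (cat k))) as [h|h].
    + rewrite depth_cat. rewrite leaves_cat, length_seq. exact Hlt.
    + exfalso; apply h. rewrite leaves_cat. simpl; auto.
Qed.

Definition S2 (m : nat) : wtree := WNode (INR m + 1) (WLeaf 1) 1 (cat m).
Definition T2 (m : nat) (L : R) : wtree :=
  WNode L (S2 m) (L + (INR m + 1)) (WLeaf (m + 3)).

Lemma pos_S2 m : pos_lengths (S2 m).
Proof.
  unfold S2. cbn [pos_lengths]. pose proof (pos_INR m).
  repeat split; auto; try lra. apply pos_cat.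
Qed.

Lemma lower2 m c : c < INR (S (S m)) / 2 ->
  exists t i, in_RB (S (S (S m))) t /\ In i (seq 1 (S (S (S m)))) /\ pos_lengths t /\ MC t /\
    c < ES t i / FP t i.
Proof.
  intros Hc.
  assert (HP : 0 < 2) by lra.
  assert (HQ : 0 < INR (S (S m))) by (apply lt_0_INR; lia).
  destruct (lb 2 (INR (S (S m))) (ES (S2 m) 1) (FP (S2 m) 1) c HP HQ
              (ES_nonneg _ _ (pos_S2 m))
              (FP_nonneg _ _ (pos_S2 m)) Hc) as [L [HL Hlt]].
  pose proof (pos_INR m).
  exists (T2 m L), 1%nat. split; [|split; [|split; [|split]]].
  - split. + unfold T2; eauto.
    + unfold T2, S2. simpl leaves. rewrite leaves_cat.
      replace (1%nat :: seq 2 (S m) ++ [(m + 3)%nat]) with (seq 1 (S (S (S m)))).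
      * apply Permutation_refl.
      * rewrite (seq_S (S (S m))). replace (1 + S (S m))%nat with (m+3)%nat by lia.
        reflexivity.
  - simpl; auto.
  - unfold T2, S2; simpl. repeat split; auto; try lra.
    apply pos_cat.
  - apply MC_of with (L + (INR m + 1)). intros j Hj. unfold T2, S2 in *. cbn [leaves app] in Hj.
    cbn [path_length leaves app].
    destruct (in_dec Nat.eq_dec j (1%nat :: leaves (cat m))) as [h|h].
    + destruct (in_dec Nat.eq_dec j [1%nat]); [lra|].
      destruct (in_dec Nat.eq_dec j (leaves (cat m))).
      * rewrite path_cat; auto. lra.
      * exfalso. destruct h; [subst; apply n; simpl; auto| tauto].
    + destruct (in_dec Nat.eq_dec j [(m+3)%nat]); [lra|].
      rewrite app_comm_cons in Hj. apply in_app_or in Hj; tauto.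
  - unfold T2. cbn [FP ES].
    destruct (in_dec Nat.eq_dec 1%nat (leaves (S2 m))) as [h|h].
    + replace (depth (S2 m) 1%nat) with 1%nat by reflexivity.
      replace (length (leaves (S2 m))) with (S (S m))
        by (unfold S2; simpl; rewrite leaves_cat, length_seq; reflexivity).
      replace (2 ^ 1) with 2 by (simpl; lra). exact Hlt.
    + exfalso; apply h. unfold S2; simpl; auto.
Qed.

Theorem theorem1 (n : nat) (hn : (3 <= n)%nat) :
  is_sup_ratio n (fun _ => True) FP ES (2 ^ (n - 2) / INR (n - 1)) /\
  is_sup_ratio n (fun _ => True) ES FP (INR (n - 1) / 2) /\
  is_sup_ratio n MC FP ES (2 ^ (n - 2) / INR (n - 1)) /\
  is_sup_ratio n MC ES FP (INR (n - 1) / 2).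
Proof.
  destruct n as [|[|[|m]]]; try lia.
  replace (S (S (S m)) - 2)%nat with (S m) by lia.
  replace (S (S (S m)) - 1)%nat with (S (S m)) by lia.
  assert (U1 := fun t i => upper1 (S (S (S m))) t i hn).
  assert (U2 := fun t i => upper2 (S (S (S m))) t i hn).
  replace (S (S (S m)) - 2)%nat with (S m) in U1 by lia.
  replace (S (S (S m)) - 1)%nat with (S (S m)) in U1, U2 by lia.
  split; [|split; [|split]]; split.
  - intros; auto.
  - intros c Hc. destruct (lower1 (S m) c Hc) as (t & i & ?&?&?&?&?).
    exists t, i; split; [|split; [|split; [|split]]]; auto.
  - intros; auto.
  - intros c Hc. destruct (lower2 m c Hc) as (t & i & ?&?&?&?&?).
    exists t, i; split; [|split; [|split; [|split]]]; auto.
  - intros; auto.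
  - intros c Hc. destruct (lower1 (S m) c Hc) as (t & i & ?&?&?&?&?).
    exists t, i; split; [|split; [|split; [|split]]]; auto.
  - intros; auto.
  - intros c Hc. destruct (lower2 m c Hc) as (t & i & ?&?&?&?&?).
    exists t, i; split; [|split; [|split; [|split]]]; auto.
Qed.
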